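(* There exist constants $\delta_1>0$ and $D_3<\infty$ such that for all $u\in\mathbb U$ and all $t\ge0$, $$\|x(t,u)-\pi\|_2\le D_3e^{-\delta_1t}\|u-\pi\|_2 .$$
   Context: Fix integers $C\ge1$, $d\ge1$ and a real $\sigma>0$. Let $\mathbb U=\{u\in\mathbb R^{C+1}:1=u_0\ge u_1\ge\cdots\ge u_C\ge0\}$ with Euclidean norm $\|\cdot\|_2$. For $u\in\mathbb U$, $x(t,u)$ is the unique solution of $x(0,u)=u$, $\frac d{dt}x_0=0$, $\frac{d}{dt}x_n=\sigma(x_{n-1}^d-x_n^d)-n(x_n-x_{n+1})$ for $1\le n\le C$, with $x_{C+1}\equiv0$. $\pi\in\mathbb U$ is the unique fixed point of this ODE in $\mathbb U$: $\pi_0=1$ and $\sigma(\pi_{n-1}^d-\pi_n^d)=n(\pi_n-\pi_{n+1})$ for $1\le n\le C$, with $\pi_{C+1}=0$. *)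

(* Defs.v *)
From Stdlib Require Import Reals Lra Lia.
From Coquelicot Require Import Coquelicot.
Open Scope R_scope.

(* Vectors in R^{C+1} are represented as functions nat -> R; only the
   coordinates 0..C are meaningful. *)

Definition inU (C : nat) (u : nat -> R) : Prop :=
  u 0%nat = 1 /\
  (forall n : nat, (n < C)%nat -> u (S n) <= u n) /\
  0 <= u C.

Definition ext (C : nat) (v : nat -> R) (n : nat) : R :=
  if Nat.leb n C then v n else 0.

Definition rhs (C d : nat) (sigma : R) (v : nat -> R) (n : nat) : R :=
  sigma * (ext C v (n - 1) ^ d - ext C v n ^ d)
  - INR n * (ext C v n - ext C v (S n)).

Definition is_solution (C d : nat) (sigma : R) (u : nat -> R)
  (x : R -> nat -> R) : Prop :=
  (forall n : nat, (n <= C)%nat -> x 0 n = u n) /\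
  (forall n : nat, (n <= C)%nat ->
     filterlim (fun s => x s n) (at_right 0) (locally (u n))) /\
  (forall t : R, 0 < t -> is_derive (fun s => x s 0%nat) t 0) /\
  (forall t : R, 0 < t -> forall n : nat, (1 <= n <= C)%nat ->
     is_derive (fun s => x s n) t (rhs C d sigma (x t) n)).

Definition is_fixed_point (C d : nat) (sigma : R) (p : nat -> R) : Prop :=
  p 0%nat = 1 /\
  (forall n : nat, (1 <= n <= C)%nat -> rhs C d sigma p n = 0).

Definition dist2 (C : nat) (v w : nat -> R) : R :=
  sqrt (sum_f_R0 (fun n => (v n - w n) ^ 2) C).

(* Main.v *)
Require Import Defs.
From Stdlib Require Import Reals Lra Lia Classical.
From Coquelicot Require Import Coquelicot.
Open Scope R_scope.


Definition RC (f : R -> R) (a : R) : Prop :=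
  forall eps, 0 < eps -> exists del, 0 < del /\
    forall y, a < y < a + del -> Rabs (f y - f a) < eps.

Lemma rlim_eps (f : R -> R) (a l : R) :
  filterlim f (at_right a) (locally l) ->
  forall eps, 0 < eps -> exists del, 0 < del /\
    forall y, a < y < a + del -> Rabs (f y - l) < eps.
Proof.
  intros H e He.
  destruct (H (ball l (mkposreal e He)) (locally_ball _ _)) as [d Hd].
  exists (pos d); split; [apply cond_pos|].
  intros y Hy. assert (Hb : ball a d y).
  { unfold ball; simpl; unfold AbsRing_ball, abs, minus, plus, opp; simpl.
    rewrite Rabs_right; lra. }
  specialize (Hd y Hb ltac:(lra)). revert Hd.
  unfold ball; simpl; unfold AbsRing_ball, abs, minus, plus, opp; simpl. auto.
Qed.

Lemma cont_eps (f : R -> R) (c : R) : continuity_pt f c ->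
  forall eps, 0 < eps -> exists del, 0 < del /\
    forall y, Rabs (y - c) < del -> Rabs (f y - f c) < eps.
Proof.
  intros H e He. destruct (H e He) as [al [Hal H2]].
  exists al; split; auto. intros y Hy.
  destruct (Req_dec c y) as [->|Hne].
  - unfold Rminus; rewrite Rplus_opp_r, Rabs_R0; auto.
  - apply (H2 y). split; [split; [exact I| exact Hne]|]. exact Hy.
Qed.

Lemma dini_core (g : R -> R) (a b : R) : a < b ->
  (forall t, a < t <= b -> continuity_pt g t) -> RC g a ->
  (forall t, a < t < b -> forall eps, 0 < eps -> exists del, 0 < del /\
     forall h, 0 < h < del -> g (t + h) <= g t + eps * h) ->
  g b <= g a.
Proof.
  intros Hab Hc Hr Hd.
  assert (Key : forall e, 0 < e -> g b <= g a + e * (b - a) + e).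
  { intros e He.
    set (S := fun t => a <= t <= b /\ g t <= g a + e * (t - a) + e).
    assert (Hbnd : bound S) by (exists b; intros t [Ht _]; lra).
    assert (Hne : exists t, S t) by (exists a; unfold S; split; [lra|];
      replace (a - a) with 0 by ring; lra).
    destruct (completeness S Hbnd Hne) as [c [Hub Hlub]].
    destruct (Hr e He) as [d0 [Hd0 Hd0']].
    set (t1 := a + Rmin d0 (b - a) / 2).
    assert (Ht1 : a < t1 <= b).
    { unfold t1; pose proof (Rmin_l d0 (b-a)); pose proof (Rmin_r d0 (b-a));
      assert (0 < Rmin d0 (b - a)) by (apply Rmin_glb_lt; lra); lra. }
    assert (HS1 : S t1).
    { split; [lra|]. assert (a < t1 < a + d0).
      { assert (Et1 : t1 = a + Rmin d0 (b - a) / 2) by reflexivity.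
        pose proof (Rmin_l d0 (b-a)); lra. }
      specialize (Hd0' t1 H). apply Rabs_def2 in Hd0'.
      assert (0 <= e * (t1 - a)) by (apply Rmult_le_pos; lra). lra. }
    pose proof (Hub t1 HS1) as Hct1.
    assert (Hcb : c <= b) by (apply Hlub; intros t [Ht _]; lra).
    assert (Hgc : g c <= g a + e * (c - a) + e).
    { destruct (Rle_dec (g c) (g a + e * (c - a) + e)) as [ok|nok]; auto.
      exfalso. set (ph := g c - (g a + e * (c - a) + e)).
      assert (Hph : 0 < ph) by (unfold ph; lra).
      destruct (cont_eps g c (Hc c ltac:(lra)) (ph / 2) ltac:(lra)) as [al [Hal Hal']].
      set (al' := Rmin al (c - a) / 2).
      assert (Hal1 : 0 < al' < al).
      { unfold al'; pose proof (Rmin_l al (c-a));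
        assert (0 < Rmin al (c - a)) by (apply Rmin_glb_lt; lra); lra. }
      destruct (classic (exists t, S t /\ c - al' < t)) as [[t [[Ht Hgt] Ht2]]|Hno].
      + pose proof (Hub t (conj Ht Hgt)) as Htc.
        assert (Rabs (t - c) < al) by (rewrite Rabs_left1; lra).
        specialize (Hal' t H). apply Rabs_def2 in Hal'.
        assert (e * (t - a) <= e * (c - a)) by (apply Rmult_le_compat_l; lra).
        unfold ph in *; lra.
      + assert (c <= c - al').
        { apply Hlub. intros t Ht. destruct (Rle_dec t (c - al')); auto.
          exfalso; apply Hno; exists t; split; auto; lra. }
        lra. }
    destruct (Req_dec c b) as [->|Hcb'].
    - exact Hgc.
    - exfalso. destruct (Hd c ltac:(lra) e He) as [dd [Hdd Hdd']].
      set (h := Rmin dd (b - c) / 2).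
      assert (Hh : 0 < h < dd /\ c + h <= b).
      { unfold h; pose proof (Rmin_l dd (b-c)); pose proof (Rmin_r dd (b-c));
        assert (0 < Rmin dd (b - c)) by (apply Rmin_glb_lt; lra); lra. }
      assert (S (c + h)).
      { split; [lra|]. specialize (Hdd' h ltac:(lra)). nra. }
      pose proof (Hub _ H). lra. }
  destruct (Rle_dec (g b) (g a)) as [ok|nok]; auto.
  set (e := (g b - g a) / (2 * (b - a + 1))).
  assert (He : 0 < e) by (unfold e; apply Rdiv_lt_0_compat; lra).
  specialize (Key e He).
  assert (e * (b - a) + e = (g b - g a) / 2) by (unfold e; field; lra).
  lra.
Qed.

Lemma RC_mult (f h : R -> R) (a : R) : RC f a -> continuity_pt h a ->
  RC (fun t => f t * h t) a.
Proof.
  intros Hf Hh e He.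
  set (K := Rabs (h a) + 1). set (F := Rabs (f a)).
  assert (HK : 0 < K) by (unfold K; pose proof (Rabs_pos (h a)); lra).
  assert (HF : 0 <= F) by apply Rabs_pos.
  destruct (Hf (e / (2 * K)) ltac:(apply Rdiv_lt_0_compat; lra)) as [d1 [Hd1 H1]].
  destruct (cont_eps h a Hh (Rmin 1 (e / (2 * (F + 1))))) as [d2 [Hd2 H2]].
  { apply Rmin_glb_lt; [lra| apply Rdiv_lt_0_compat; lra]. }
  exists (Rmin d1 d2); split; [apply Rmin_glb_lt; lra|].
  intros y Hy.
  assert (Hy1 : a < y < a + d1) by (pose proof (Rmin_l d1 d2); lra).
  assert (Hy2 : Rabs (y - a) < d2) by (pose proof (Rmin_r d1 d2); rewrite Rabs_right; lra).
  specialize (H1 y Hy1). specialize (H2 y Hy2).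
  pose proof (Rmin_l 1 (e / (2 * (F + 1)))) as M1.
  pose proof (Rmin_r 1 (e / (2 * (F + 1)))) as M2.
  assert (Hhy : Rabs (h y) <= K).
  { unfold K. pose proof (Rabs_triang_inv (h y) (h a)). lra. }
  replace (f y * h y - f a * h a) with ((f y - f a) * h y + f a * (h y - h a)) by ring.
  eapply Rle_lt_trans; [apply Rabs_triang|]. rewrite !Rabs_mult.
  assert (A1 : Rabs (f y - f a) * Rabs (h y) <= e / (2 * K) * K).
  { apply Rmult_le_compat; try apply Rabs_pos; lra. }
  assert (A2 : Rabs (f a) * Rabs (h y - h a) <= F * (e / (2 * (F + 1)))).
  { fold F. apply Rmult_le_compat_l; lra. }
  assert (E1 : e / (2 * K) * K = e / 2) by (field; lra).
  assert (E2 : F * (e / (2 * (F + 1))) < e / 2).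
  { apply Rmult_lt_reg_r with (2 * (F + 1)); [lra|].
    replace (F * (e / (2 * (F + 1))) * (2 * (F + 1))) with (F * e) by (field; lra).
    nra. }
  assert (Hhy' : Rabs (h y) < K).
  { unfold K. pose proof (Rabs_triang_inv (h y) (h a)). lra. }
  assert (Rabs (f y - f a) * Rabs (h y) < e / (2 * K) * K).
  { apply Rmult_le_0_lt_compat; try apply Rabs_pos; lra. }
  lra.
Qed.

Lemma exp_cont (L t : R) : continuity_pt (fun s => exp (- L * s)) t.
Proof.
  apply derivable_continuous_pt. apply ex_derive_Reals_0. auto_derive. auto.
Qed.

Lemma exp_le (x y : R) : x <= y -> exp x <= exp y.
Proof. intros [H|H]; [left; apply exp_increasing; auto| subst; lra]. Qed.

Lemma dini (f : R -> R) (L a b : R) : a < b ->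
  (forall t, a < t <= b -> continuity_pt f t) -> RC f a ->
  (forall t, a < t < b -> 0 <= f t) ->
  (forall t, a < t < b -> forall eps, 0 < eps -> exists del, 0 < del /\
     forall h, 0 < h < del -> f (t + h) <= f t + h * (L * f t) + eps * h) ->
  f b <= f a * exp (L * (b - a)).
Proof.
  intros Hab Hc Hr Hp Hd.
  set (g := fun t => f t * exp (- L * t)).
  assert (Hg : g b <= g a).
  { apply dini_core; auto.
    - intros t Ht. unfold g. apply continuity_pt_mult; [auto| apply exp_cont].
    - unfold g. apply RC_mult; auto. apply exp_cont.
    - intros t Ht e He.
      set (Q := exp (Rabs L * (Rabs t + 1))).
      assert (HQ : 0 < Q) by apply exp_pos.
      destruct (Hd t Ht (e / Q) ltac:(apply Rdiv_lt_0_compat; lra)) as [dd [Hdd Hdd']].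
      exists (Rmin dd 1); split; [apply Rmin_glb_lt; lra|].
      intros h Hh. pose proof (Rmin_l dd 1); pose proof (Rmin_r dd 1).
      specialize (Hdd' h ltac:(lra)). unfold g.
      assert (Ee : exp (- L * (t + h)) = exp (- L * t) * exp (- L * h))
        by (rewrite <- exp_plus; f_equal; ring).
      assert (E1 : (1 + h * L) * exp (- L * h) <= 1).
      { pose proof (exp_ineq1_le (h * L)).
        assert (exp (h * L) * exp (- L * h) = 1) by (rewrite <- exp_plus, <- exp_0; f_equal; ring).
        pose proof (exp_pos (- L * h)). nra. }
      assert (E2 : exp (- L * (t + h)) <= Q).
      { apply exp_le. pose proof (Rabs_pos L).
        assert (- L * (t + h) <= Rabs (- L * (t + h))) by apply RRle_abs.
        rewrite Rabs_mult, Rabs_Ropp in H2.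
        assert (Rabs (t + h) <= Rabs t + 1).
        { pose proof (Rabs_triang t h). rewrite (Rabs_right h) in H3; lra. }
        nra. }
      pose proof (exp_pos (- L * (t + h))). pose proof (exp_pos (- L * t)).
      pose proof (Hp t Ht).
      assert (f (t + h) * exp (- L * (t + h)) <=
              (f t + h * (L * f t) + e / Q * h) * exp (- L * (t + h)))
        by (apply Rmult_le_compat_r; lra).
      assert ((f t + h * (L * f t)) * exp (- L * (t + h)) <= f t * exp (- L * t)).
      { rewrite Ee. replace ((f t + h * (L * f t)) * (exp (- L * t) * exp (- L * h)))
          with ((f t * exp (- L * t)) * ((1 + h * L) * exp (- L * h))) by ring.
        assert (0 <= f t * exp (- L * t)) by nra. nra. }
      assert (e / Q * h * exp (- L * (t + h)) <= e * h).
      { replace (e * h) with (e / Q * h * Q) by (field; lra).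
        apply Rmult_le_compat_l; [|lra]. apply Rmult_le_pos; [|lra].
        left; apply Rdiv_lt_0_compat; lra. }
      nra. }
  unfold g in Hg.
  assert (Hb : f b = f b * exp (- L * b) * exp (L * b))
    by (rewrite Rmult_assoc, <- exp_plus; replace (- L * b + L * b) with 0 by ring;
        rewrite exp_0; ring).
  assert (Ha : f a * exp (L * (b - a)) = f a * exp (- L * a) * exp (L * b))
    by (rewrite Rmult_assoc, <- exp_plus; f_equal; f_equal; ring).
  rewrite Hb, Ha. apply Rmult_le_compat_r; [left; apply exp_pos| auto].
Qed.

Definition LimW (W : R -> R -> Prop) (f : R -> R) (v : R) : Prop :=
  forall eps, 0 < eps -> exists del, 0 < del /\ forall y, W del y -> Rabs (f y - v) < eps.

Definition antiW (W : R -> R -> Prop) : Prop :=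
  forall d1 d2 y, W (Rmin d1 d2) y -> W d1 y /\ W d2 y.

Lemma LimW_plus W f g a b : antiW W -> LimW W f a -> LimW W g b ->
  LimW W (fun s => f s + g s) (a + b).
Proof.
  intros HW Hf Hg e He.
  destruct (Hf (e/2) ltac:(lra)) as [d1 [Hd1 H1]].
  destruct (Hg (e/2) ltac:(lra)) as [d2 [Hd2 H2]].
  exists (Rmin d1 d2); split; [apply Rmin_glb_lt; lra|].
  intros y Hy. destruct (HW _ _ _ Hy) as [Y1 Y2].
  specialize (H1 y Y1); specialize (H2 y Y2).
  replace (f y + g y - (a + b)) with ((f y - a) + (g y - b)) by ring.
  eapply Rle_lt_trans; [apply Rabs_triang|]. lra.
Qed.

Lemma LimW_const W c : LimW W (fun _ => c) c.
Proof. intros e He; exists 1; split; [lra|]; intros; unfold Rminus; rewrite Rplus_opp_r, Rabs_R0; lra. Qed.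

Lemma LimW_opp W f a : LimW W f a -> LimW W (fun s => - f s) (- a).
Proof.
  intros H e He; destruct (H e He) as [d [Hd H1]]; exists d; split; auto.
  intros y Hy; specialize (H1 y Hy). replace (- f y - - a) with (- (f y - a)) by ring.
  rewrite Rabs_Ropp; auto.
Qed.

Lemma LimW_abs W f a : LimW W f a -> LimW W (fun s => Rabs (f s)) (Rabs a).
Proof.
  intros H e He; destruct (H e He) as [d [Hd H1]]; exists d; split; auto.
  intros y Hy; specialize (H1 y Hy). eapply Rle_lt_trans; [apply Rabs_triang_inv2|]. auto.
Qed.

Lemma LimW_sum W (F : nat -> R -> R) (v : nat -> R) N : antiW W ->
  (forall n, (n <= N)%nat -> LimW W (F n) (v n)) ->
  LimW W (fun s => sum_f_R0 (fun n => F n s) N) (sum_f_R0 v N).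
Proof.
  intros HW; induction N as [|N IH]; intros H.
  - simpl. apply H. lia.
  - simpl. apply LimW_plus; auto.
Qed.

Definition Wc (t : R) := fun del y => Rabs (y - t) < del.
Definition Wr (a : R) := fun del y => a < y < a + del.

Lemma antiWc t : antiW (Wc t).
Proof. intros d1 d2 y H; unfold Wc in *; pose proof (Rmin_l d1 d2); pose proof (Rmin_r d1 d2); lra. Qed.
Lemma antiWr t : antiW (Wr t).
Proof. intros d1 d2 y H; unfold Wr in *; pose proof (Rmin_l d1 d2); pose proof (Rmin_r d1 d2); lra. Qed.

Lemma Wc_cont f t : LimW (Wc t) f (f t) -> continuity_pt f t.
Proof.
  intros H e He. destruct (H e He) as [d [Hd H1]]. exists d; split; auto.
  intros y [_ Hy]. apply H1. exact Hy.
Qed.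

Lemma cont_Wc f t : continuity_pt f t -> LimW (Wc t) f (f t).
Proof. intros H e He. destruct (cont_eps f t H e He) as [d [Hd H1]]. exists d; split; auto. Qed.

Lemma Wr_RC f a : LimW (Wr a) f (f a) -> RC f a.
Proof. auto. Qed.

Lemma Wc_Wr f t : LimW (Wc t) f (f t) -> LimW (Wr t) f (f t).
Proof.
  intros H e He. destruct (H e He) as [d [Hd H1]]. exists d; split; auto.
  intros y Hy; apply H1; unfold Wr, Wc in *; rewrite Rabs_right; lra.
Qed.

Lemma rlim_Wr f a l : filterlim f (at_right a) (locally l) -> LimW (Wr a) f l.
Proof. intros H e He. destruct (rlim_eps f a l H e He) as [d [Hd H1]]. exists d; split; auto. Qed.

Lemma derive_Wc f t l : is_derive f t l -> LimW (Wc t) f (f t).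
Proof.
  intros H. apply cont_Wc. apply derivable_continuous_pt. exists l.
  apply is_derive_Reals. exact H.
Qed.

Definition Dn (f : R -> R) (t m : R) : Prop :=
  forall eps, 0 < eps -> exists del, 0 < del /\
    forall h, 0 < h < del -> f (t + h) <= f t + h * m + eps * h.

Lemma Dn_plus f g t m1 m2 : Dn f t m1 -> Dn g t m2 -> Dn (fun s => f s + g s) t (m1 + m2).
Proof.
  intros Hf Hg e He.
  destruct (Hf (e/2) ltac:(lra)) as [d1 [Hd1 H1]].
  destruct (Hg (e/2) ltac:(lra)) as [d2 [Hd2 H2]].
  exists (Rmin d1 d2); split; [apply Rmin_glb_lt; lra|].
  intros h Hh. pose proof (Rmin_l d1 d2); pose proof (Rmin_r d1 d2).
  specialize (H1 h ltac:(lra)); specialize (H2 h ltac:(lra)). nra.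
Qed.

Lemma Dn_le f t m m' : Dn f t m -> m <= m' -> Dn f t m'.
Proof.
  intros H Hm e He. destruct (H e He) as [d [Hd H1]]. exists d; split; auto.
  intros h Hh; specialize (H1 h Hh). nra.
Qed.

Lemma Dn_sum (F : nat -> R -> R) (m : nat -> R) t N :
  (forall n, (n <= N)%nat -> Dn (F n) t (m n)) ->
  Dn (fun s => sum_f_R0 (fun n => F n s) N) t (sum_f_R0 m N).
Proof.
  induction N as [|N IH]; intros H.
  - simpl. apply H. lia.
  - simpl. apply (Dn_plus (fun s => sum_f_R0 (fun n => F n s) N) (F (S N))); auto.
Qed.

Definition sgnc (v l : R) : R :=
  if Rlt_dec 0 v then 1 else if Rlt_dec v 0 then -1 else if Rle_dec 0 l then 1 else -1.

Lemma sgnc_pm v l : sgnc v l = 1 \/ sgnc v l = -1.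
Proof. unfold sgnc; repeat destruct Rlt_dec; try destruct Rle_dec; auto. Qed.

Lemma sgnc_abs v l : sgnc v l * v = Rabs v.
Proof.
  unfold sgnc; destruct (Rlt_dec 0 v).
  - rewrite Rabs_right; lra.
  - destruct (Rlt_dec v 0).
    + rewrite Rabs_left; lra.
    + assert (v = 0) by lra. subst. rewrite Rabs_R0. destruct Rle_dec; lra.
Qed.

Lemma deriv_lin f t l : is_derive f t l -> forall eps, 0 < eps -> exists del, 0 < del /\
  forall h, 0 < h < del -> Rabs (f (t + h) - f t - h * l) <= eps * h.
Proof.
  intros H e He. apply is_derive_Reals in H. destruct (H e He) as [d Hd].
  exists (pos d); split; [apply cond_pos|]. intros h Hh.
  assert (h <> 0) by lra. assert (Rabs h < d) by (rewrite Rabs_right; lra).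
  specialize (Hd h H0 H1).
  replace (f (t + h) - f t - h * l) with (h * ((f (t + h) - f t) / h - l)) by (field; auto).
  rewrite Rabs_mult, (Rabs_right h) by lra. nra.
Qed.

Lemma Dn_deriv f t l : is_derive f t l -> Dn f t l.
Proof.
  intros H e He. destruct (deriv_lin f t l H e He) as [d [Hd H1]]. exists d; split; auto.
  intros h Hh. specialize (H1 h Hh). pose proof (Rle_abs (f (t + h) - f t - h * l)). lra.
Qed.

Lemma Dn_abs f t l : is_derive f t l -> Dn (fun s => Rabs (f s)) t (sgnc (f t) l * l).
Proof.
  intros H e He. destruct (deriv_lin f t l H e He) as [d [Hd H1]].
  set (d' := Rmin d (Rabs (f t) / (Rabs l + 1))).
  assert (Hl : 0 < Rabs l + 1) by (pose proof (Rabs_pos l); lra).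
  destruct (Req_dec (f t) 0) as [Hz|Hnz].
  - exists d; split; auto. intros h Hh. specialize (H1 h Hh).
    rewrite Hz in *. rewrite Rabs_R0.
    assert (Rabs (f (t + h)) <= Rabs (h * l) + e * h).
    { replace (f (t + h)) with ((f (t + h) - 0 - h * l) + h * l) by ring.
      pose proof (Rabs_triang (f (t + h) - 0 - h * l) (h * l)). lra. }
    assert (Rabs (h * l) = h * (sgnc 0 l * l)).
    { rewrite Rabs_mult, (Rabs_right h) by lra. unfold sgnc.
      destruct (Rlt_dec 0 0); [lra|]. destruct (Rlt_dec 0 0); [lra|].
      destruct (Rle_dec 0 l); [rewrite Rabs_right; lra| rewrite Rabs_left; lra]. }
    lra.
  - assert (Hp : 0 < Rabs (f t)) by (apply Rabs_pos_lt; auto).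
    exists d'; split.
    { unfold d'; apply Rmin_glb_lt; [lra| apply Rdiv_lt_0_compat; lra]. }
    intros h Hh. assert (Hd' : d' <= d) by (unfold d'; apply Rmin_l).
    assert (Hd2 : d' <= Rabs (f t) / (Rabs l + 1)) by (unfold d'; apply Rmin_r).
    specialize (H1 h ltac:(lra)).
    assert (Hhl : h * Rabs l < Rabs (f t)).
    { assert (h * (Rabs l + 1) < Rabs (f t)).
      { apply Rlt_le_trans with (d' * (Rabs l + 1)); [nra|].
        replace (Rabs (f t)) with (Rabs (f t) / (Rabs l + 1) * (Rabs l + 1)) by (field; lra).
        nra. }
      lra. }
    assert (Rabs (f (t + h)) <= Rabs (f t + h * l) + e * h).
    { replace (f (t + h)) with ((f (t + h) - f t - h * l) + (f t + h * l)) by ring.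
      pose proof (Rabs_triang (f (t + h) - f t - h * l) (f t + h * l)). lra. }
    assert (Rabs (f t + h * l) = Rabs (f t) + h * (sgnc (f t) l * l)).
    { pose proof (Rle_abs l). pose proof (Rle_abs (- l)) as Hm. rewrite Rabs_Ropp in Hm.
      unfold sgnc. destruct (Rlt_dec 0 (f t)).
      - rewrite (Rabs_right (f t)) by lra. rewrite Rabs_right. lra.
        rewrite (Rabs_right (f t)) in Hhl by lra. nra.
      - destruct (Rlt_dec (f t) 0); [|lra].
        rewrite (Rabs_left (f t)) by lra. rewrite Rabs_left. lra.
        rewrite (Rabs_left (f t)) in Hhl by lra. nra. }
    lra.
Qed.

Lemma sum_nonneg (F : nat -> R) N : (forall n, (n <= N)%nat -> 0 <= F n) -> 0 <= sum_f_R0 F N.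
Proof.
  induction N; intros H; simpl; [apply H; lia|].
  assert (0 <= F (S N)) by (apply H; lia). assert (0 <= sum_f_R0 F N) by (apply IHN; intros; apply H; lia). lra.
Qed.

Lemma term_le_sum (F : nat -> R) N k : (forall n, (n <= N)%nat -> 0 <= F n) -> (k <= N)%nat ->
  F k <= sum_f_R0 F N.
Proof.
  induction N; intros H Hk; simpl.
  - replace k with 0%nat by lia. lra.
  - destruct (Nat.eq_dec k (S N)) as [->|Hne].
    + assert (0 <= sum_f_R0 F N) by (apply sum_nonneg; intros; apply H; lia). lra.
    + assert (F k <= sum_f_R0 F N) by (apply IHN; [intros; apply H; lia| lia]).
      assert (0 <= F (S N)) by (apply H; lia). lra.
Qed.

Lemma sum_le_K (F : nat -> R) N K : (forall n, (n <= N)%nat -> F n <= K) ->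
  sum_f_R0 F N <= INR (S N) * K.
Proof.
  intros H. rewrite Rmult_comm, <- sum_cte. apply sum_Rle. auto.
Qed.

Lemma pow_abs_bound (a M : R) (d : nat) : (1 <= d)%nat -> Rabs a <= M ->
  Rabs (a ^ d) <= M ^ (d - 1) * Rabs a.
Proof.
  intros Hd Ha. destruct d as [|d]; [lia|]. replace (S d - 1)%nat with d by lia.
  rewrite <- RPow_abs. simpl. rewrite Rmult_comm. apply Rmult_le_compat_r; [apply Rabs_pos|].
  apply pow_incr. split; [apply Rabs_pos| auto].
Qed.

Lemma neg_pow1 (a M : R) (d : nat) : (1 <= d)%nat -> Rabs a <= M ->
  - a ^ d <= M ^ (d - 1) * (Rabs a - a).
Proof.
  intros Hd Ha. pose proof (pow_abs_bound a M d Hd Ha).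
  assert (HM : 0 <= M ^ (d - 1)) by (apply pow_le; pose proof (Rabs_pos a); lra).
  destruct (Rle_dec 0 a).
  - rewrite Rabs_right by lra. replace (a - a) with 0 by ring.
    pose proof (pow_le a d r). lra.
  - rewrite (Rabs_left a) by lra. rewrite (Rabs_left a) in H by lra.
    pose proof (Rle_abs (- a ^ d)). rewrite Rabs_Ropp in H0.
    assert (0 <= M ^ (d - 1) * (- a)) by (apply Rmult_le_pos; lra). lra.
Qed.

Lemma neg_pow2 (a M : R) (d : nat) : (1 <= d)%nat -> Rabs a <= M -> a <= 0 ->
  a ^ d <= M ^ (d - 1) * (Rabs a - a).
Proof.
  intros Hd Ha Hn. pose proof (pow_abs_bound a M d Hd Ha).
  assert (HM : 0 <= M ^ (d - 1)) by (apply pow_le; pose proof (Rabs_pos a); lra).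
  pose proof (Rle_abs (a ^ d)). rewrite (Rabs_left1 a) in * by lra. nra.
Qed.

Lemma term_pos (s a xn b sg M nn : R) (d : nat) : (s = 1 \/ s = -1) -> s * xn = Rabs xn ->
  Rabs a <= M -> Rabs xn <= M -> 0 <= sg -> 0 <= nn -> (1 <= d)%nat ->
  s * (sg * (a ^ d - xn ^ d) - nn * (xn - b)) - (sg * (a ^ d - xn ^ d) - nn * (xn - b))
  <= 2 * (sg * M ^ (d - 1) * ((Rabs a - a) + (Rabs xn - xn)) + nn * (Rabs b - b)).
Proof.
  intros [Hs|Hs] Hx Ha Hxn Hsg Hn Hd; subst s.
  - assert (0 <= M ^ (d - 1)) by (apply pow_le; pose proof (Rabs_pos a); lra).
    assert (0 <= Rabs a - a) by (pose proof (Rle_abs a); lra).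
    assert (0 <= Rabs xn - xn) by (pose proof (Rle_abs xn); lra).
    assert (0 <= Rabs b - b) by (pose proof (Rle_abs b); lra).
    assert (0 <= sg * M ^ (d - 1) * ((Rabs a - a) + (Rabs xn - xn))) by
      (apply Rmult_le_pos; [apply Rmult_le_pos|]; lra).
    assert (0 <= nn * (Rabs b - b)) by (apply Rmult_le_pos; lra).
    lra.
  - assert (Hxn0 : xn <= 0) by (pose proof (Rabs_pos xn); lra).
    pose proof (neg_pow1 a M d Hd Ha).
    pose proof (neg_pow2 xn M d Hd Hxn Hxn0).
    assert (- b <= Rabs b - b) by (pose proof (Rabs_pos b); pose proof (Rle_abs (-b)); rewrite Rabs_Ropp in *; lra).
    assert (nn * xn <= 0) by nra.
    assert (- nn * b <= nn * (Rabs b - b)) by nra.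
    assert (sg * (- a ^ d) <= sg * (M ^ (d - 1) * (Rabs a - a))) by (apply Rmult_le_compat_l; lra).
    assert (sg * (xn ^ d) <= sg * (M ^ (d - 1) * (Rabs xn - xn))) by (apply Rmult_le_compat_l; lra).
    nra.
Qed.

Lemma sA (s E A : R) : (s = 1 \/ s = -1) -> s * E = Rabs E -> A * E >= 0 -> (E = 0 -> A = 0) ->
  s * A = Rabs A.
Proof.
  intros [-> | ->] HE HA Hz.
  - destruct (Req_dec E 0) as [Z|Z]; [rewrite (Hz Z), Rabs_R0; ring|].
    assert (E > 0) by (destruct (Rle_dec E 0); [rewrite Rabs_left1 in HE; lra| lra]).
    assert (A >= 0) by nra. rewrite Rabs_right; lra.
  - destruct (Req_dec E 0) as [Z|Z]; [rewrite (Hz Z), Rabs_R0; ring|].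
    assert (E < 0) by (destruct (Rle_dec 0 E); [rewrite Rabs_right in HE; lra| lra]).
    assert (A <= 0) by nra. rewrite Rabs_left1; lra.
Qed.

Lemma powdiff_sign (a b : R) (d : nat) : 0 <= a -> 0 <= b -> (a ^ d - b ^ d) * (a - b) >= 0.
Proof.
  intros Ha Hb. destruct (Rle_dec a b).
  - pose proof (pow_incr a b d ltac:(lra)). nra.
  - pose proof (pow_incr b a d ltac:(lra)). nra.
Qed.

Lemma s_le_abs (s z : R) : (s = 1 \/ s = -1) -> s * z <= Rabs z.
Proof.
  intros [-> | ->]; [rewrite Rmult_1_l; apply Rle_abs|].
  pose proof (Rle_abs (-z)); rewrite Rabs_Ropp in *; lra.
Qed.

Lemma term_con (s E E1 Am An sg nn : R) : (s = 1 \/ s = -1) -> s * E = Rabs E -> s * An = Rabs An ->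
  0 <= sg ->  0 <= nn ->
  s * (sg * (Am - An) - nn * (E - E1)) <=
  (sg * Rabs Am - (nn - 1) * Rabs E) - (sg * Rabs An - nn * Rabs E1) - Rabs E.
Proof.
  intros Hs HE HA Hsg Hn.
  assert (s * Am <= Rabs Am) by (apply s_le_abs; auto).
  assert (s * E1 <= Rabs E1) by (apply s_le_abs; auto).
  assert (sg * (s * Am) <= sg * Rabs Am) by (apply Rmult_le_compat_l; lra).
  assert (nn * (s * E1) <= nn * Rabs E1) by (apply Rmult_le_compat_l; lra).
  replace (s * (sg * (Am - An) - nn * (E - E1))) with
    (sg * (s * Am) - sg * (s * An) - nn * (s * E) + nn * (s * E1)) by ring.
  rewrite HE, HA. lra.
Qed.

Lemma telescope (T B Y : nat -> R) N :
  (forall n, (1 <= n <= N)%nat -> T n <= B (n - 1)%nat - B n - Y n) ->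
  sum_f_R0 T N <= T 0%nat + B 0%nat - B N - (sum_f_R0 Y N - Y 0%nat).
Proof.
  induction N; intros H; simpl; [lra|].
  assert (IH := IHN ltac:(intros; apply H; lia)).
  specialize (H (S N) ltac:(lia)). replace (S N - 1)%nat with N in H by lia. lra.
Qed.

Lemma l2_le_l1 (y : nat -> R) N :
  sqrt (sum_f_R0 (fun n => y n ^ 2) N) <= sum_f_R0 (fun n => Rabs (y n)) N.
Proof.
  assert (H : forall N, sum_f_R0 (fun n => y n ^ 2) N <= (sum_f_R0 (fun n => Rabs (y n)) N) ^ 2
             /\ 0 <= sum_f_R0 (fun n => Rabs (y n)) N).
  { induction N0.
    - cbn [sum_f_R0]. rewrite <- pow2_abs. split; [lra| apply Rabs_pos].
    - rewrite !tech5. destruct IHN0 as [H1 H2]. pose proof (Rabs_pos (y (S N0))).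
      rewrite <- (pow2_abs (y (S N0))). split; nra. }
  destruct (H N) as [H1 H2].
  rewrite <- (sqrt_pow2 (sum_f_R0 (fun n => Rabs (y n)) N)) by auto.
  apply sqrt_le_1_alt. auto.
Qed.

Lemma l1_le_l2 (y : nat -> R) N :
  sum_f_R0 (fun n => Rabs (y n)) N <= sqrt (INR (S N)) * sqrt (sum_f_R0 (fun n => y n ^ 2) N).
Proof.
  assert (H : forall N, (sum_f_R0 (fun n => Rabs (y n)) N) ^ 2 <= (INR N + 1) * sum_f_R0 (fun n => y n ^ 2) N
             /\ 0 <= sum_f_R0 (fun n => Rabs (y n)) N /\ 0 <= sum_f_R0 (fun n => y n ^ 2) N).
  { induction N0.
    - cbn [sum_f_R0]. rewrite <- (pow2_abs (y 0%nat)). simpl INR. pose proof (Rabs_pos (y 0%nat)). split; [nra| split; [lra| nra]].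
        - rewrite !tech5. destruct IHN0 as [H1 [H2 H3]]. set (A := sum_f_R0 (fun n => Rabs (y n)) N0) in *.
      set (S2 := sum_f_R0 (fun n => y n ^ 2) N0) in *.
      rewrite <- (pow2_abs (y (S N0))).
      set (a := Rabs (y (S N0))). assert (Ha : 0 <= a) by apply Rabs_pos.
      pose proof (pos_INR N0). rewrite S_INR.
      split; [|split; [nra| pose proof (pow2_ge_0 a); nra]].
      assert (2 * A * a * (INR N0 + 1) <= A ^ 2 + (INR N0 + 1) ^ 2 * a ^ 2) by (pose proof (pow2_ge_0 (A - (INR N0 + 1) * a)); nra).
      assert (2 * A * a <= S2 + (INR N0 + 1) * a ^ 2).
      { apply Rmult_le_reg_r with (INR N0 + 1); [lra|]. nra. }
      nra. }
  destruct (H N) as [H1 [H2 H3]].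
  rewrite <- sqrt_mult by (try apply pos_INR; auto).
  rewrite <- (sqrt_pow2 (sum_f_R0 (fun n => Rabs (y n)) N)) by auto.
  apply sqrt_le_1_alt. rewrite S_INR. auto.
Qed.

Definition Hyps C d sigma pi u x : Prop :=
  (1 <= C)%nat /\ (1 <= d)%nat /\ 0 < sigma /\ inU C pi /\ is_fixed_point C d sigma pi /\
  inU C u /\ is_solution C d sigma u x.

Lemma inU_nonneg C v : inU C v -> forall n, (n <= C)%nat -> 0 <= v n.
Proof.
  intros [H0 [Hm HC]].
  assert (K : forall k, (k <= C)%nat -> 0 <= v (C - k)%nat).
  { induction k; intros Hk. { replace (C - 0)%nat with C by lia. auto. }
    assert (IH := IHk ltac:(lia)). specialize (Hm (C - S k)%nat ltac:(lia)).
    replace (S (C - S k)) with (C - k)%nat in Hm by lia. lra. }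
  intros n Hn. replace n with (C - (C - n))%nat by lia. apply K. lia.
Qed.

Definition lv C d sigma (x : R -> nat -> R) t n : R :=
  if Nat.eqb n 0 then 0 else rhs C d sigma (x t) n.

Lemma derivs C d sigma pi u x : Hyps C d sigma pi u x ->
  forall t, 0 < t -> forall n, (n <= C)%nat -> is_derive (fun s => x s n) t (lv C d sigma x t n).
Proof.
  intros (HC & Hd & Hs & Hpi & Hfp & Hu & Hsol0 & Hsol1 & Hsol2 & Hsol3) t Ht n Hn.
  unfold lv. destruct (Nat.eqb_spec n 0) as [->|Hne].
  - apply Hsol2; auto.
  - apply Hsol3; auto. lia.
Qed.

Lemma cont_coord C d sigma pi u x : Hyps C d sigma pi u x ->
  forall t, 0 < t -> forall n, (n <= C)%nat -> LimW (Wc t) (fun s => x s n) (x t n).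
Proof.
  intros H t Ht n Hn. apply (derive_Wc _ _ _ (derivs C d sigma pi u x H t Ht n Hn)).
Qed.

Lemma rc_coord C d sigma pi u x : Hyps C d sigma pi u x ->
  forall t, 0 <= t -> forall n, (n <= C)%nat -> LimW (Wr t) (fun s => x s n) (x t n).
Proof.
  intros H t Ht n Hn. destruct Ht as [Ht|Ht].
  - apply Wc_Wr. eapply cont_coord; eauto.
  - subst t. destruct H as (HC & Hd & Hs & Hpi & Hfp & Hu & Hsol0 & Hsol1 & Hsol2 & Hsol3).
    rewrite Hsol0 by auto. apply rlim_Wr. auto.
Qed.

Lemma LimW_eqv W f a b : LimW W f a -> a = b -> LimW W f b.
Proof. intros H ->; auto. Qed.

Lemma der_sub_c f t l c : is_derive f t l -> is_derive (fun s => f s - c) t l.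
Proof.
  intro H. apply is_derive_Reals in H. apply is_derive_Reals. replace l with (l - 0) by ring.
  apply (derivable_pt_lim_minus f (fun _ => c)); auto. apply derivable_pt_lim_const.
Qed.

Lemma der_opp f t l : is_derive f t l -> is_derive (fun s => - f s) t (- l).
Proof.
  intro H. apply is_derive_Reals in H. apply is_derive_Reals.
  apply (derivable_pt_lim_opp f); auto.
Qed.

Lemma x0_one C d sigma pi u x : Hyps C d sigma pi u x -> forall t, 0 <= t -> x t 0%nat = 1.
Proof.
  intros H t Ht.
  assert (Hx00 : x 0 0%nat = 1).
  { destruct H as (HC & Hd & Hs & Hpi & Hfp & Hu & Hsol0 & _). rewrite Hsol0 by lia. apply Hu. }
  destruct Ht as [Ht| <-]; auto.
  set (f := fun s => Rabs (x s 0%nat - 1)).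
  assert (Hf : f t <= f 0 * exp (0 * (t - 0))).
  { apply dini; auto.
    - intros s Hs. apply Wc_cont. unfold f. apply LimW_abs. apply LimW_plus; [apply antiWc| |apply LimW_const].
      apply (cont_coord C d sigma pi u x H s ltac:(lra) 0%nat ltac:(lia)).
    - unfold f. apply LimW_abs. apply LimW_plus; [apply antiWr| |apply LimW_const].
      apply (rc_coord C d sigma pi u x H 0 ltac:(lra) 0%nat ltac:(lia)).
    - intros; unfold f; apply Rabs_pos.
    - intros s Hs. apply (Dn_le _ _ (sgnc (x s 0%nat - 1) 0 * 0)).
      + unfold f. apply (Dn_abs (fun s => x s 0%nat - 1)). apply der_sub_c.
        pose proof (derivs C d sigma pi u x H s ltac:(lra) 0%nat ltac:(lia)) as D.
        unfold lv in D. simpl in D. exact D.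
      + lra. }
  unfold f in Hf. rewrite Hx00 in Hf. replace (1 - 1) with 0 in Hf by ring.
  rewrite Rabs_R0, Rmult_0_l in Hf. pose proof (Rabs_pos (x t 0%nat - 1)).
  assert (Rabs (x t 0%nat - 1) = 0) by lra.
  apply Rabs_eq_0 in H1. lra.
Qed.

Definition Q C (x : R -> nat -> R) s := sum_f_R0 (fun n => Rabs (x s n) - x s n) C.

Lemma N2_nonneg a : 0 <= Rabs a - a.
Proof. pose proof (Rle_abs a); lra. Qed.

Lemma Q_nonneg C x s : 0 <= Q C x s.
Proof. apply sum_nonneg. intros; apply N2_nonneg. Qed.

Lemma ext_le C v n : (n <= C)%nat -> ext C v n = v n.
Proof. intros H. unfold ext. apply Nat.leb_le in H. rewrite H. auto. Qed.

Lemma ext_gt C v n : (C < n)%nat -> ext C v n = 0.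
Proof. intros H. unfold ext. assert (Nat.leb n C = false) by (apply Nat.leb_gt; lia). rewrite H0. auto. Qed.

Lemma N2_le_Q C x s k : Rabs (ext C (x s) k) - ext C (x s) k <= Q C x s.
Proof.
  destruct (Compare_dec.le_lt_dec k C) as [Hk|Hk].
  - rewrite ext_le by auto. apply (term_le_sum (fun n => Rabs (x s n) - x s n)); auto.
    intros; apply N2_nonneg.
  - rewrite ext_gt by auto. rewrite Rabs_R0. pose proof (Q_nonneg C x s). lra.
Qed.

Lemma Q_Wc C d sigma pi u x : Hyps C d sigma pi u x -> forall t, 0 < t ->
  LimW (Wc t) (Q C x) (Q C x t).
Proof.
  intros H t Ht. unfold Q.
  apply (LimW_sum (Wc t) (fun n s => Rabs (x s n) - x s n) (fun n => Rabs (x t n) - x t n)).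
  { apply antiWc. }
  intros n Hn. apply LimW_plus; [apply antiWc| apply LimW_abs| apply LimW_opp];
  apply (cont_coord C d sigma pi u x H t Ht n Hn).
Qed.

Lemma Q_Wr C d sigma pi u x : Hyps C d sigma pi u x -> forall t, 0 <= t ->
  LimW (Wr t) (Q C x) (Q C x t).
Proof.
  intros H t Ht. unfold Q.
  apply (LimW_sum (Wr t) (fun n s => Rabs (x s n) - x s n) (fun n => Rabs (x t n) - x t n)).
  { apply antiWr. }
  intros n Hn. apply LimW_plus; [apply antiWr| apply LimW_abs| apply LimW_opp];
  apply (rc_coord C d sigma pi u x H t Ht n Hn).
Qed.

Lemma Q_zero C d sigma pi u x : Hyps C d sigma pi u x -> Q C x 0 = 0.
Proof.
  intros H. destruct H as (HC & Hd & Hs & Hpi & Hfp & Hu & Hsol0 & _).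
  unfold Q. rewrite <- (sum_eq (fun _ => 0)).
  - rewrite sum_cte. ring.
  - intros n Hn. rewrite Hsol0 by auto. rewrite Rabs_right.
    ring. pose proof (inU_nonneg C u Hu n Hn); lra.
Qed.

Lemma Q_Dn C d sigma pi u x : Hyps C d sigma pi u x -> forall t, 0 < t -> forall M,
  (forall n, (n <= C)%nat -> Rabs (x t n) <= M) ->
  Dn (Q C x) t (INR (S C) * (4 * sigma * M ^ (d - 1) + 2 * INR C) * Q C x t).
Proof.
  intros H t Ht M HM.
  pose proof H as (HC & Hd & Hs & Hpi & Hfp & Hu & Hsol).
  assert (HM0 : 0 <= M) by (pose proof (HM 0%nat ltac:(lia)); pose proof (Rabs_pos (x t 0%nat)); lra).
  assert (HMd : 0 <= M ^ (d - 1)) by (apply pow_le; auto).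
  assert (HQ := Q_nonneg C x t).
  assert (HK : 0 <= (4 * sigma * M ^ (d - 1) + 2 * INR C) * Q C x t).
  { apply Rmult_le_pos; auto. pose proof (pos_INR C). nra. }
  apply Dn_le with (sum_f_R0 (fun n => sgnc (x t n) (lv C d sigma x t n) * lv C d sigma x t n
                                        + - lv C d sigma x t n) C).
  - unfold Q.
    apply (Dn_sum (fun n s => Rabs (x s n) - x s n)).
    intros n Hn. apply (Dn_plus (fun s => Rabs (x s n)) (fun s => - x s n)).
    + apply Dn_abs. apply (derivs C d sigma pi u x H t Ht n Hn).
    + apply Dn_deriv. apply der_opp. apply (derivs C d sigma pi u x H t Ht n Hn).
  - rewrite Rmult_assoc. apply sum_le_K. intros n Hn. unfold lv.
    destruct (Nat.eqb_spec n 0) as [->|Hne].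
    + lra.
    + unfold rhs.
      assert (Ea : Rabs (ext C (x t) (n - 1)) <= M) by (rewrite ext_le by lia; apply HM; lia).
      assert (Exn : ext C (x t) n = x t n) by (apply ext_le; lia).
      rewrite Exn.
      pose proof (term_pos (sgnc (x t n) (sigma * (ext C (x t) (n - 1) ^ d - x t n ^ d) -
                   INR n * (x t n - ext C (x t) (S n)))) (ext C (x t) (n - 1)) (x t n) (ext C (x t) (S n))
                   sigma M (INR n) d (sgnc_pm _ _) (sgnc_abs _ _) Ea (HM n Hn) ltac:(lra) (pos_INR n) Hd) as T.
      pose proof (N2_le_Q C x t (n - 1)). pose proof (N2_le_Q C x t n). rewrite Exn in H1.
      pose proof (N2_le_Q C x t (S n)).
      pose proof (N2_nonneg (ext C (x t) (S n))).
      assert (INR n <= INR C) by (apply le_INR; auto).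
      pose proof (pos_INR n).
      assert (INR n * (Rabs (ext C (x t) (S n)) - ext C (x t) (S n)) <= INR C * Q C x t).
      { apply Rmult_le_compat; auto. }
      assert (sigma * M ^ (d - 1) * (Rabs (ext C (x t) (n - 1)) - ext C (x t) (n - 1) + (Rabs (x t n) - x t n))
              <= sigma * M ^ (d - 1) * (2 * Q C x t)).
      { apply Rmult_le_compat_l; [apply Rmult_le_pos; lra| lra]. }
      lra.
Qed.

Lemma local_bound C d sigma pi u x : Hyps C d sigma pi u x -> forall tau, 0 <= tau ->
  exists eta M, 0 < eta /\ forall s, tau < s < tau + eta -> forall n, (n <= C)%nat -> Rabs (x s n) <= M.
Proof.
  intros H tau Htau.
  assert (L : LimW (Wr tau) (fun s => sum_f_R0 (fun n => Rabs (x s n - x tau n)) C)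
                 (sum_f_R0 (fun n => Rabs (x tau n - x tau n)) C)).
  { apply (LimW_sum (Wr tau) (fun n s => Rabs (x s n - x tau n)) (fun n => Rabs (x tau n - x tau n))).
    { apply antiWr. }
    intros n Hn. apply LimW_abs. apply LimW_plus; [apply antiWr| |apply LimW_const].
    apply (rc_coord C d sigma pi u x H tau Htau n Hn). }
  destruct (L 1 ltac:(lra)) as [eta [Heta He]].
  set (S0 := sum_f_R0 (fun n => Rabs (x tau n - x tau n)) C).
  set (S1 := sum_f_R0 (fun n => Rabs (x tau n)) C).
  exists eta, (1 + S0 + S1). split; auto.
  intros s Hs n Hn. specialize (He s Hs). apply Rabs_def2 in He.
  assert (Rabs (x s n - x tau n) <= sum_f_R0 (fun n => Rabs (x s n - x tau n)) C).
  { apply (term_le_sum (fun n => Rabs (x s n - x tau n))); auto. intros; apply Rabs_pos. }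
  assert (Rabs (x tau n) <= S1).
  { apply (term_le_sum (fun n => Rabs (x tau n))); auto. intros; apply Rabs_pos. }
  pose proof (Rabs_triang (x s n - x tau n) (x tau n)).
  replace (x s n - x tau n + x tau n) with (x s n) in H2 by ring.
  fold S0 in He. lra.
Qed.

Lemma Q_le0 C d sigma pi u x : Hyps C d sigma pi u x -> forall s, 0 <= s -> Q C x s <= 0.
Proof.
  intros H. pose proof H as (HC & Hd & Hs & Hpi & Hfp & Hu & Hsol).
  assert (Ext : forall c, 0 <= c -> Q C x c <= 0 -> exists eta, 0 < eta /\
             forall s, c < s <= c + eta -> Q C x s <= 0).
  { intros c Hc HQc. destruct (local_bound C d sigma pi u x H c Hc) as [eta [M [Heta HB]]].
    exists (eta / 2). split; [lra|]. intros s Hs'.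
    set (LQ := INR (S C) * (4 * sigma * M ^ (d - 1) + 2 * INR C)).
    assert (Hd1 : Q C x s <= Q C x c * exp (LQ * (s - c))).
    { apply dini; [lra| | | |].
      - intros t Ht. apply Wc_cont. apply (Q_Wc C d sigma pi u x H t). lra.
      - apply (Q_Wr C d sigma pi u x H c Hc).
      - intros; apply Q_nonneg.
      - intros t Ht. apply (Q_Dn C d sigma pi u x H t ltac:(lra) M). apply HB. lra. }
    pose proof (exp_pos (LQ * (s - c))). pose proof (Q_nonneg C x c). nra. }
  intros s0 Hs0. destruct (Rle_dec (Q C x s0) 0) as [ok|nok]; auto. exfalso.
  set (G := fun tau => 0 <= tau /\ forall s, 0 <= s <= tau -> Q C x s <= 0).
  assert (HG0 : G 0).
  { split; [lra|]. intros s Hs'. replace s with 0 by lra. rewrite (Q_zero C d sigma pi u x H). lra. }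
  assert (Hbd : bound G).
  { exists s0. intros tau [Ht Hall]. destruct (Rle_dec tau s0); auto.
    exfalso. apply nok. apply Hall. lra. }
  destruct (completeness G Hbd (ex_intro _ 0 HG0)) as [c [Hub Hlub]].
  assert (Hc0 : 0 <= c) by (apply Hub; auto).
  assert (Hbelow : forall s, 0 <= s < c -> Q C x s <= 0).
  { intros s Hs'. destruct (classic (exists tau, G tau /\ s < tau)) as [[tau [[_ Ha] Hst]]|Hno].
    - apply Ha. lra.
    - assert (c <= s); [|lra]. apply Hlub. intros tau Ht. destruct (Rle_dec tau s); auto.
      exfalso; apply Hno; exists tau; split; auto; lra. }
  assert (HQc : Q C x c <= 0).
  { destruct Hc0 as [Hc0| <-]; [|rewrite (Q_zero C d sigma pi u x H); lra].
    destruct (Rle_dec (Q C x c) 0) as [ok2|nok2]; auto. exfalso.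
    destruct (Q_Wc C d sigma pi u x H c Hc0 (Q C x c / 2) ltac:(lra)) as [dl [Hdl Hdl']].
    set (y := c - Rmin dl c / 2).
    assert (0 < Rmin dl c) by (apply Rmin_glb_lt; lra).
    assert (Hy : 0 <= y < c) by (unfold y; pose proof (Rmin_r dl c); lra).
    assert (Wc c dl y) by (unfold Wc, y; rewrite Rabs_left; pose proof (Rmin_l dl c); lra).
    specialize (Hdl' y H1). apply Rabs_def2 in Hdl'. specialize (Hbelow y Hy). lra. }
  destruct (Ext c Hc0 HQc) as [eta [Heta Heta']].
  assert (G (c + eta)).
  { split; [lra|]. intros s Hs'. destruct (Rle_dec s c).
    - destruct (Req_dec s c) as [->|Hne]; auto. apply Hbelow; lra.
    - apply Heta'; lra. }
  pose proof (Hub _ H0). lra.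
Qed.

Lemma x_nonneg C d sigma pi u x : Hyps C d sigma pi u x -> forall s, 0 <= s ->
  forall n, (n <= C)%nat -> 0 <= x s n.
Proof.
  intros H s Hs n Hn. pose proof (Q_le0 C d sigma pi u x H s Hs).
  assert (Rabs (x s n) - x s n <= Q C x s).
  { apply (term_le_sum (fun n => Rabs (x s n) - x s n)); auto. intros; apply N2_nonneg. }
  destruct (Rle_dec 0 (x s n)); auto. rewrite Rabs_left in H1; lra.
Qed.

Definition V C (x : R -> nat -> R) (pi : nat -> R) s := sum_f_R0 (fun n => Rabs (x s n - pi n)) C.

Lemma V_Dn C d sigma pi u x : Hyps C d sigma pi u x -> forall t, 0 < t ->
  Dn (V C x pi) t (-1 * V C x pi t).
Proof.
  intros H t Ht. pose proof H as (HC & Hd & Hs & Hpi & Hfp & Hu & Hsol).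
  set (m := fun n => sgnc (x t n - pi n) (lv C d sigma x t n) * lv C d sigma x t n).
  apply Dn_le with (sum_f_R0 m C).
  { unfold V. apply (Dn_sum (fun n s => Rabs (x s n - pi n))). intros n Hn.
    apply (Dn_abs (fun s => x s n - pi n)). apply der_sub_c.
    apply (derivs C d sigma pi u x H t Ht n Hn). }
  set (A := fun k => ext C (x t) k ^ d - ext C pi k ^ d).
  set (Ef := fun k => ext C (x t) k - ext C pi k).
  set (B := fun k => sigma * Rabs (A k) - INR k * Rabs (Ef (S k))).
  set (Y := fun k => Rabs (Ef k)).
  assert (Hx0 : x t 0%nat = 1) by (apply (x0_one C d sigma pi u x H); lra).
  assert (Hp0 : pi 0%nat = 1) by apply Hpi.
  pose proof (telescope m B Y C) as Tel.
  assert (Hterm : forall n, (1 <= n <= C)%nat -> m n <= B (n - 1)%nat - B n - Y n).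
  { intros n Hn. unfold m, lv. destruct (Nat.eqb_spec n 0) as [->|Hne]; [lia|].
    assert (Hrp : rhs C d sigma pi n = 0) by (apply Hfp; auto).
    assert (Elv : rhs C d sigma (x t) n = sigma * (A (n - 1)%nat - A n) - INR n * (Ef n - Ef (S n))).
    { transitivity (rhs C d sigma (x t) n - rhs C d sigma pi n); [rewrite Hrp; ring|].
      unfold rhs, A, Ef. ring. }
    rewrite Elv.
    assert (EE : Ef n = x t n - pi n) by (unfold Ef; rewrite !ext_le by lia; auto).
    set (s := sgnc (x t n - pi n) (sigma * (A (n - 1)%nat - A n) - INR n * (Ef n - Ef (S n)))).
    assert (Hs1 : s = 1 \/ s = -1) by apply sgnc_pm.
    assert (HsE : s * Ef n = Rabs (Ef n)) by (rewrite EE; apply sgnc_abs).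
    assert (HsA : s * A n = Rabs (A n)).
    { apply (sA s (Ef n)); auto.
      - unfold A, Ef. rewrite !ext_le by lia. apply powdiff_sign.
        + apply (x_nonneg C d sigma pi u x H); [lra|lia].
        + apply (inU_nonneg C pi Hpi); lia.
      - intros Z. unfold A. rewrite !ext_le by lia. rewrite EE in Z.
        replace (x t n) with (pi n) by lra. ring. }
    pose proof (term_con s (Ef n) (Ef (S n)) (A (n - 1)%nat) (A n) sigma (INR n) Hs1 HsE HsA
                 ltac:(lra) (pos_INR n)) as TC.
    unfold B, Y. replace (S (n - 1)) with n by lia.
    rewrite minus_INR by lia. simpl INR. lra. }
  specialize (Tel Hterm).
  assert (Hm0 : m 0%nat = 0) by (unfold m, lv; simpl; ring).
  assert (HB0 : B 0%nat = 0).
  { unfold B, A. rewrite !ext_le by lia. rewrite Hx0, Hp0. simpl INR.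
    replace (1 ^ d - 1 ^ d) with 0 by ring. rewrite Rabs_R0. ring. }
  assert (HBC : 0 <= B C).
  { unfold B, Ef. rewrite !ext_gt by lia. replace (0 - 0) with 0 by ring. rewrite Rabs_R0.
    pose proof (Rabs_pos (A C)). nra. }
  assert (HY0 : Y 0%nat = 0).
  { unfold Y, Ef. rewrite !ext_le by lia. rewrite Hx0, Hp0. replace (1 - 1) with 0 by ring. apply Rabs_R0. }
  assert (HYV : sum_f_R0 Y C = V C x pi t).
  { unfold V. apply sum_eq. intros n Hn. unfold Y, Ef. rewrite !ext_le by lia. auto. }
  lra.
Qed.

Lemma V_bound C d sigma pi u x : Hyps C d sigma pi u x -> forall t, 0 <= t ->
  V C x pi t <= V C x pi 0 * exp (-1 * t).
Proof.
  intros H t Ht. destruct Ht as [Ht| <-].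
  2: { rewrite Rmult_0_r, exp_0. lra. }
  replace (-1 * t) with (-1 * (t - 0)) by ring.
  apply dini; auto.
  - intros s Hs. apply Wc_cont. unfold V.
    apply (LimW_sum (Wc s) (fun n s => Rabs (x s n - pi n)) (fun n => Rabs (x s n - pi n))); [apply antiWc|].
    intros n Hn. apply LimW_abs. apply LimW_plus; [apply antiWc| |apply LimW_const].
    apply (cont_coord C d sigma pi u x H s ltac:(lra) n Hn).
  - unfold RC. fold (LimW (Wr 0) (V C x pi) (V C x pi 0)). unfold V.
    apply (LimW_sum (Wr 0) (fun n s => Rabs (x s n - pi n)) (fun n => Rabs (x 0 n - pi n))); [apply antiWr|].
    intros n Hn. apply LimW_abs. apply LimW_plus; [apply antiWr| |apply LimW_const].
    apply (rc_coord C d sigma pi u x H 0 ltac:(lra) n Hn).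
  - intros; unfold V; apply sum_nonneg; intros; apply Rabs_pos.
  - intros s Hs. apply (V_Dn C d sigma pi u x H s). lra.
Qed.

Theorem mainTheorem4 (C d : nat) (sigma : R) (pi : nat -> R) :
  (1 <= C)%nat -> (1 <= d)%nat -> 0 < sigma ->
  inU C pi -> is_fixed_point C d sigma pi ->
  exists delta1 D3 : R, 0 < delta1 /\
    forall (u : nat -> R) (x : R -> nat -> R),
      inU C u -> is_solution C d sigma u x ->
      forall t : R, 0 <= t ->
        dist2 C (x t) pi <= D3 * exp (- delta1 * t) * dist2 C u pi.
Proof.
  intros HC Hd Hs Hpi Hfp. exists 1, (sqrt (INR (S C))). split; [lra|].
  intros u x Hu Hsol t Ht.
  assert (H : Hyps C d sigma pi u x) by (unfold Hyps; tauto).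
  assert (H1 : dist2 C (x t) pi <= V C x pi t) by apply (l2_le_l1 (fun n => x t n - pi n)).
  pose proof (V_bound C d sigma pi u x H t Ht) as H2.
  assert (H3 : V C x pi 0 <= sqrt (INR (S C)) * dist2 C u pi).
  { unfold V, dist2. rewrite (sum_eq (fun n => Rabs (x 0 n - pi n)) (fun n => Rabs (u n - pi n))).
    - apply (l1_le_l2 (fun n => u n - pi n)).
    - intros n Hn. destruct Hsol as [Hs0 _]. rewrite Hs0 by auto. auto. }
  pose proof (exp_pos (-1 * t)).
  replace (- (1) * t) with (-1 * t) by ring. nra.
Qed.
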